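(* Let $X$ be a Gorenstein fake weighted projective space with weights $(\lambda_0,\ldots,\lambda_n)$ having at worst canonical singularities, and let $h:=\sum_{i=0}^n\lambda_i$. Then $h\leq t_n$, where $t_n:=y_n-1$ and $(y_k)$ is the Sylvester sequence $y_0:=2$, $y_k:=1+y_0y_1\cdots y_{k-1}$ for $k\ge1$.
   Context: Let $N\cong\mathbb{Z}^n$ be a lattice and $N_\mathbb{R}:=N\otimes_\mathbb{Z}\mathbb{R}$. Let $\rho_0,\ldots,\rho_n\in N$ be primitive lattice points with $N_\mathbb{R}=\sum_{i=0}^n\mathbb{R}_{\geq0}\rho_i$. There are positive integers $\lambda_0,\ldots,\lambda_n$ with $\gcd\{\lambda_0,\ldots,\lambda_n\}=1$, unique up to order, such that $\sum_{i=0}^n\lambda_i\rho_i=0$. The cones $\sigma_i$ generated by $\{\rho_j: j\neq i\}$ generate a complete simplicial fan; the associated projective toric variety $X$ is called a fake weighted projective space with weights $(\lambda_0,\ldots,\lambda_n)$. *)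

(* Defs.v *)
From HB Require Import structures.
From mathcomp Require Import all_boot all_order all_algebra.
Set Implicit Arguments. Unset Strict Implicit. Unset Printing Implicit Defensive.
Import Order.TTheory GRing.Theory Num.Theory.
Local Open Scope ring_scope.

(* Lattice N = Z^n: points are row vectors 'rV[int]_n; the dual lattice M is
   also 'rV[int]_n with the standard pairing. N_Q = 'rV[rat]_n. *)

Definition pairing {R : pzRingType} {n : nat} (u v : 'rV[R]_n) : R :=
  \sum_(k < n) u 0 k * v 0 k.

Definition toQ {n : nat} (v : 'rV[int]_n) : 'rV[rat]_n := map_mx intr v.

Definition primitive {n : nat} (v : 'rV[int]_n) : Prop :=
  forall (k : int) (w : 'rV[int]_n), v = k *: w -> k = 1 \/ k = -1.

Definition in_cone_sigma {n : nat} (rho : 'I_n.+1 -> 'rV[int]_n) (i : 'I_n.+1)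
  (v : 'rV[rat]_n) : Prop :=
  exists c : 'I_n.+1 -> rat, (forall j, 0 <= c j) /\
    v = \sum_(j < n.+1 | j != i) c j *: toQ (rho j).

(* N_R = sum_i R_{>=0} rho_i (stated over Q, equivalent since the rho_i are
   rational) *)
Definition spans_positively {n : nat} (rho : 'I_n.+1 -> 'rV[int]_n) : Prop :=
  forall v : 'rV[rat]_n, exists c : 'I_n.+1 -> rat,
    (forall j, 0 <= c j) /\ v = \sum_(j < n.+1) c j *: toQ (rho j).

Definition are_weights {n : nat} (rho : 'I_n.+1 -> 'rV[int]_n)
  (lam : 'I_n.+1 -> nat) : Prop :=
  (forall i, (0 < lam i)%N) /\ (\big[gcdn/0%N]_(i < n.+1) lam i = 1%N) /\
  \sum_(i < n.+1) (lam i)%:Z *: rho i = 0.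

(* Gorenstein: on every maximal cone sigma_i the canonical divisor is Cartier,
   i.e. there is u_i in M with <u_i, rho_j> = 1 for all j <> i. *)
Definition gorenstein {n : nat} (rho : 'I_n.+1 -> 'rV[int]_n) : Prop :=
  forall i : 'I_n.+1, exists u : 'rV[int]_n,
    forall j, j != i -> pairing u (rho j) = 1.

(* canonical singularities (Q-Gorenstein toric criterion): for each maximal
   cone sigma_i with u_i in M_Q such that <u_i, rho_j> = 1 for j <> i, every
   nonzero lattice point v of sigma_i satisfies <u_i, v> >= 1. *)
Definition canonical_sing {n : nat} (rho : 'I_n.+1 -> 'rV[int]_n) : Prop :=
  forall (i : 'I_n.+1) (u : 'rV[rat]_n),
    (forall j, j != i -> pairing u (toQ (rho j)) = 1) ->
    forall v : 'rV[int]_n, v != 0 -> in_cone_sigma rho i (toQ v) ->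
      1 <= pairing u (toQ v).

(* Sylvester sequence: y_0 = 2, y_k = 1 + y_0 ... y_{k-1}.
   syl_prod k = y_0 * ... * y_{k-1}. *)
Fixpoint syl_prod (k : nat) : nat :=
  match k with
  | 0 => 1
  | k'.+1 => syl_prod k' * (1 + syl_prod k')
  end.
Definition sylvester (k : nat) : nat := 1 + syl_prod k.
Definition t_seq (n : nat) : nat := sylvester n - 1.

(* Main.v *)
Require Import Defs.
From HB Require Import structures.
From mathcomp Require Import all_boot all_order all_algebra.
Set Implicit Arguments. Unset Strict Implicit. Unset Printing Implicit Defensive.
Import Order.TTheory GRing.Theory Num.Theory.
Lemma integ_dvd (n : nat) (w : nat -> nat) (h : nat) :
 (forall i, i <= n -> w i %| h) ->
 forall j, j <= n ->
  (\prod_(0 <= i < j.+1) w i %| h ^ j * \sum_(0 <= i < j.+1) w i) /\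
  (\prod_(0 <= i < j.+1) w i %| h ^ j.+1).
Proof.
move=> wd; elim=> [|j IH] hj.
  by rewrite !big_nat1 expn0 mul1n expn1 dvdnn wd.
have [IH1 IH2] := IH (ltnW hj).
have -> : \prod_(0 <= i < j.+2) w i = \prod_(0 <= i < j.+1) w i * w j.+1.
  by rewrite (big_nat_recr j.+1).
have -> : \sum_(0 <= i < j.+2) w i = \sum_(0 <= i < j.+1) w i + w j.+1.
  by rewrite (big_nat_recr j.+1).
rewrite !expnS.
split.
  rewrite mulnDr; apply: dvdn_add.
    by rewrite -mulnA [h * _]mulnC dvdn_mul // wd.
  by rewrite dvdn_mul // -expnS.
by rewrite mulnC dvdn_mul // ?wd // -expnS.
Qed.

Lemma integ_le (n : nat) (w : nat -> nat) (h : nat) :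
 h = \sum_(0 <= i < n.+1) w i ->
 (forall i, i <= n -> 0 < w i) ->
 (forall i, i <= n -> w i %| h) ->
 forall j, j < n ->
  \prod_(0 <= i < j.+1) w i <= h ^ j * \sum_(j.+1 <= i < n.+1) w i.
Proof.
move=> hdef wpos wd j hj.
have [D1 D2] := integ_dvd wd (ltnW hj).
have Hs : \sum_(j.+1 <= i < n.+1) w i = h - \sum_(0 <= i < j.+1) w i.
  by rewrite hdef (@big_cat_nat _ _ _ j.+1 0 n.+1) //= ?addKn // ltnS ltnW.
apply: dvdn_leq.
  rewrite muln_gt0 expn_gt0 (_ : 0 < h) /=.
    by rewrite (big_ltn (_ : j.+1 < n.+1)) // addn_gt0 wpos.
  by rewrite hdef big_ltn // addn_gt0 wpos.
by rewrite Hs mulnBr -[h ^ j * h]mulnC -expnS dvdn_sub.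
Qed.

Lemma logn_prod (I : finType) p (F : I -> nat) :
  (forall i, 0 < F i) -> logn p (\prod_i F i) = \sum_i logn p (F i).
Proof.
move=> Fpos.
have : (0 < \prod_i F i) /\ logn p (\prod_i F i) = \sum_i logn p (F i).
  elim/big_rec2: _ => [|i a b _ [bpos IH]]; first by rewrite logn1.
  by rewrite muln_gt0 Fpos bpos lognM // IH.
by case.
Qed.

Lemma prod_dvd (n : nat) (lam : 'I_n.+2 -> nat) :
  (forall i, 0 < lam i) -> \big[gcdn/0]_i lam i = 1 ->
  (forall i, lam i %| \sum_i lam i) -> \prod_i lam i %| (\sum_i lam i) ^ n.
Proof.
set h := \sum_i lam i => lpos lg ld.
have hpos : 0 < h by rewrite /h (bigD1 ord0) // addn_gt0 lpos.
have Ppos : 0 < \prod_i lam i by rewrite prodn_gt0.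
apply/dvdn_partP => // p; rewrite mem_primes => /and3P [pp _ _].
rewrite p_part pfactor_dvdn // ?expn_gt0 ?hpos // lognX logn_prod //.
have lle : forall i, logn p (lam i) <= logn p h by move=> i; apply: dvdn_leq_log.
case: (posnP (logn p h)) => [L0|Lpos].
  rewrite big1 // => i _; apply/eqP; rewrite -leqn0 -L0 lle //.
have ph : p %| h by move: Lpos; rewrite logn_gt0 mem_primes => /and3P [].
have [i0 Hi0] : exists i0, ~~ (p %| lam i0).
  case: (pickP (fun i => ~~ (p %| lam i))) => [i0 Hi0 | H]; first by exists i0.
  have : p %| \big[gcdn/0]_i lam i by apply/dvdn_biggcdP => i _; move: (H i) => /= /negbFE.
  by rewrite lg dvdn1 => /eqP p1; rewrite p1 in pp.
have [i1 ne Hi1] : exists2 i1, i1 != i0 & ~~ (p %| lam i1).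
  case: (pickP (fun i => (i != i0) && ~~ (p %| lam i))) => [i1 /andP [] | H]; first by exists i1.
  have : p %| \sum_(i | i != i0) lam i.
    apply: dvdn_sum => i ni; move: (H i) => /=; rewrite ni /= => /negbFE //.
  move=> dS; move: ph; rewrite /h (bigD1 i0) //= dvdn_addl // => Hd.
  by rewrite Hd in Hi0.
have l0 : forall i, ~~ (p %| lam i) -> logn p (lam i) = 0.
  by move=> i Hi; apply: logn_coprime; rewrite prime_coprime.
set L := logn p h.
have E : \sum_(i | (i != i0) && (i != i1)) L = n * L.
  have := sum_nat_const 'I_n.+2 L; rewrite card_ord.
  rewrite (bigD1 i0) //= (bigD1 i1) //=.
  by rewrite !mulSn => /eqP; rewrite !eqn_add2l => /eqP.
rewrite (bigD1 i0) //= (bigD1 i1) //= l0 // l0 // !add0n.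
by rewrite -E; apply: leq_sum => i _; exact: lle.
Qed.

Section RS.
Local Open Scope ring_scope.

Lemma majL_key (m : nat) (x z : nat -> rat) :
 (forall l, (l < m)%N -> 0 < x l) ->
 (forall l, (l.+1 < m)%N -> x l.+1 <= x l) ->
 (forall i, (i <= m)%N -> \sum_(i <= l < m) z l <= \sum_(i <= l < m) x l) ->
 forall k i, (i + k.+1)%N = m ->
  (\sum_(i <= l < m) x l - \sum_(i <= l < m) z l) / x i <=
   \sum_(i <= l < m) (x l - z l) / x l.
Proof.
move=> xpos xdec tails.
pose F i := \sum_(i <= l < m) (x l - z l) / x l.
pose D i := \sum_(i <= l < m) x l - \sum_(i <= l < m) z l.
have key : forall k i, (i + k.+1)%N = m -> D i / x i <= F i.
  elim=> [|k IH] i him.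
    by rewrite /D /F -him addn1 !big_nat1.
  have hi : (i < m)%N by rewrite -him addnS ltnS leq_addr.
  have hi1 : (i.+1 < m)%N by rewrite -him addnS ltnS addnS ltnS leq_addr.
  have IH1 : D i.+1 / x i.+1 <= F i.+1 by apply: IH; rewrite addSnnS.
  have HD : D i = (x i - z i) + D i.+1.
    rewrite /D (big_ltn hi) (big_ltn hi).
    by rewrite opprD addrACA.
  have HF : F i = (x i - z i) / x i + F i.+1 by rewrite /F (big_ltn hi).
  have D1 : 0 <= D i.+1 by rewrite /D subr_ge0 tails.
  rewrite HD HF mulrDl lerD2l; apply: le_trans IH1.
  by rewrite ler_wpM2l // lef_pV2 ?posrE ?xpos //; apply: xdec.
exact: key.
Qed.

Lemma majL (m : nat) (x z : nat -> rat) :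
 (forall l, (l < m)%N -> 0 < x l) ->
 (forall l, (l.+1 < m)%N -> x l.+1 <= x l) ->
 (forall l, (l < m)%N -> 0 <= z l) ->
 (forall i, (i <= m)%N -> \sum_(i <= l < m) z l <= \sum_(i <= l < m) x l) ->
 \prod_(0 <= l < m) z l <= \prod_(0 <= l < m) x l.
Proof.
move=> xpos xdec zpos tails.
case: m xpos xdec zpos tails => [|m] xpos xdec zpos tails.
  by rewrite !big_geq.
have F0 : 0 <= \sum_(0 <= l < m.+1) (x l - z l) / x l.
  apply: le_trans (majL_key xpos xdec tails (add0n _)).
  by apply: divr_ge0; [rewrite subr_ge0 tails | apply/ltW/xpos].
have Hsum : \sum_(0 <= l < m.+1) z l / x l <= m.+1%:R.
  have -> : \sum_(0 <= l < m.+1) z l / x l = m.+1%:R - \sum_(0 <= l < m.+1) (x l - z l) / x l.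
    rewrite -[m.+1 in X in X%:R](size_iota 0 m.+1) -sum1_size natr_sum.
    rewrite -sumrB; apply: eq_big_seq => l; rewrite mem_iota add0n => /= hl.
    by rewrite mulrBl divff ?gt_eqF ?xpos // opprB addrC subrK.
  by rewrite lerBlDr lerDl.
have agm := (@leif_AGM _ 'I_m.+1 predT (fun i : 'I_m.+1 => z i / x i) _).1.
have cardT : #|(predT : {pred 'I_m.+1})| = m.+1 by rewrite cardT size_enum_ord.
rewrite cardT in agm.
have E1 : \prod_(i in (predT : {pred 'I_m.+1})) (z i / x i) <= 1.
  apply: (le_trans (agm _)); first by move=> i _; rewrite divr_ge0 ?zpos ?ltW ?xpos.
  apply: exprn_ile1.
    by rewrite divr_ge0 // sumr_ge0 // => i _; rewrite divr_ge0 ?zpos ?ltW ?xpos.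
  rewrite ler_pdivrMr ?ltr0n // mul1r.
  by apply: le_trans Hsum; rewrite big_mkord.
have Ex : 0 <= \prod_(0 <= l < m.+1) x l by rewrite big_mkord prodr_ge0 // => i _; rewrite ltW ?xpos.
have -> : \prod_(0 <= l < m.+1) z l = \prod_(i in (predT : {pred 'I_m.+1})) (z i / x i) * \prod_(0 <= l < m.+1) x l.
  rewrite !big_mkord -big_split /=; apply: eq_bigr => i _.
  by rewrite divfK ?gt_eqF ?xpos.
by rewrite -[X in _ <= X]mul1r ler_wpM2r.
Qed.

Lemma syl_pos k : (0 < syl_prod k)%N.
Proof. by elim: k => //= k IH; rewrite muln_gt0 IH. Qed.

Definition uu (k : nat) : rat := ((syl_prod k)%:R)^-1.
Definition zf (n i : nat) : rat := if (i < n)%N then ((1 + syl_prod i)%:R)^-1 else uu n.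

Lemma inv_split (p : rat) : p != 0 -> 1 + p != 0 -> p^-1 = (1+p)^-1 + (p * (1+p))^-1.
Proof.
move=> p0 p1; apply: (mulfI p0).
rewrite mulfV // invfM mulrDr mulrA mulfV // mul1r -{2}[(1+p)^-1]mul1r -mulrDl addrC mulfV //.
Qed.

Lemma uu_rec k : uu k = ((1 + syl_prod k)%:R)^-1 + uu k.+1.
Proof.
rewrite /uu /= natrM natrD; apply: inv_split.
  by rewrite pnatr_eq0 -lt0n syl_pos.
by rewrite -mulrS pnatr_eq0.
Qed.

Lemma prod_z n j : (j <= n)%N -> \prod_(0 <= i < j) zf n i = uu j.
Proof.
elim: j => [|j IH] hj.
  by rewrite big_geq // /uu /= invr1.
rewrite big_nat_recr //= IH ?(ltnW hj) // /zf hj /uu /= natrM invfM.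
by rewrite mulrC.
Qed.

Lemma tail_z n : forall k j, (j + k)%N = n -> \sum_(j <= i < n.+1) zf n i = uu j.
Proof.
elim=> [|k IH] j hj.
  by rewrite addn0 in hj; rewrite -hj big_nat1 /zf ltnn.
have hjn : (j < n)%N by rewrite -hj addnS ltnS leq_addr.
rewrite big_ltn ?ltnS ?(ltnW hjn) // IH; last by rewrite addSnnS.
by rewrite /zf hjn [in RHS]uu_rec.
Qed.

Lemma analytic (n : nat) (w : nat -> nat) (h : nat) :
 h = (\sum_(0 <= i < n.+1) w i)%N ->
 (forall i, (i <= n)%N -> (0 < w i)%N) ->
 (forall i, (i <= n)%N -> (w i %| h)%N) ->
 (forall i, (i < n)%N -> (w i.+1 <= w i)%N) ->
 (h ^ n.+1 <= (\prod_(0 <= i < n.+1) w i) * (syl_prod n)^2)%N.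
Proof.
move=> hdef wpos wd wdec.
have hpos : (0 < h)%N by rewrite hdef big_ltn // addn_gt0 wpos.
have hR : (h%:R : rat) != 0 by rewrite pnatr_eq0 -lt0n.
have hR0 : (0 : rat) < h%:R by rewrite ltr0n.
pose x i : rat := (w i)%:R / h%:R.
pose s j := \sum_(j <= i < n.+1) x i.
have xpos : forall l, (l < n.+1)%N -> 0 < x l.
  by move=> l hl; rewrite divr_gt0 ?ltr0n ?wpos // -ltnS.
have xdec : forall l, (l.+1 < n.+1)%N -> x l.+1 <= x l.
  by move=> l hl; rewrite ler_pM2r ?invr_gt0 // ler_nat wdec.
have zpos : forall l, 0 <= zf n l.
  by move=> l; rewrite /zf /uu; case: ifP => _; rewrite invr_ge0 ler0n.
have s0 : s 0%N = 1 by rewrite /s -mulr_suml -natr_sum -hdef mulfV.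
have sdiff : forall i j, (i <= j)%N -> (j <= n.+1)%N -> \sum_(i <= l < j) x l = s i - s j.
  by move=> i j hij hjn; rewrite /s (big_cat_nat hij hjn) /= addrK.
have zdiff : forall i j, (i <= j)%N -> (j <= n)%N -> \sum_(i <= l < j) zf n l = uu i - uu j.
  move=> i j hij hjn.
  rewrite -(tail_z (subnKC (leq_trans hij hjn))) -(tail_z (subnKC hjn)).
  by rewrite (big_cat_nat hij (leq_trans hjn (leqnSn _))) /= addrK.
have prodx : forall j, (\prod_(0 <= i < j) x i) = (\prod_(0 <= i < j) w i)%:R / h%:R ^+ j.
  by move=> j; rewrite prodf_div natr_prod prodr_const_nat subn0.
have aj : forall j, (j <= n)%N -> \prod_(0 <= i < j) x i <= s j.
  case=> [|j] hj; first by rewrite big_geq // s0.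
  rewrite prodx /s -mulr_suml -natr_sum ler_pdivrMr ?exprn_gt0 //.
  rewrite exprS mulrA divfK // -natrX -natrM ler_nat mulnC.
  exact: integ_le.
have curt : forall j, (j <= n)%N -> uu j <= s j.
  elim/ltn_ind=> j IH hj.
  case: (lerP (uu j) (s j)) => // hlt.
  have hjn1 : (j <= n.+1)%N by apply: leq_trans hj (leqnSn _).
  have := @majL j x (zf n).
  rewrite prod_z //.
  move=> H; have {H} H : uu j <= \prod_(0 <= i < j) x i.
    apply: H => //.
    - by move=> l hl; apply: xpos; apply: leq_trans hl _.
    - by move=> l hl; apply: xdec; apply: leq_trans hl _.
    - move=> i hi; rewrite sdiff // zdiff //.
      case: (ltnP i j) => hij.
        by apply: lerB; [apply: IH => //; apply: leq_trans (ltnW hij) hj | apply: ltW].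
      have -> : i = j by apply/eqP; rewrite eqn_leq hi hij.
      by rewrite !subrr.
  have := le_trans H (aj j hj).
  by rewrite leNgt hlt.
have := @majL n.+1 x (zf n) xpos xdec (fun l _ => zpos l).
rewrite big_nat_recr //= prod_z // prodx {2}/zf ltnn.
move=> H; have {H} H : uu n * uu n <= (\prod_(0 <= i < n.+1) w i)%:R / h%:R ^+ n.+1.
  apply: H => i hi.
  case: (ltnP i n.+1) => hin.
    rewrite -/(s i) (tail_z (subnKC _)); last by rewrite -ltnS.
    by apply: curt; rewrite -ltnS.
  have -> : i = n.+1 by apply/eqP; rewrite eqn_leq hi hin.
  by rewrite !big_geq.
move: H; rewrite ler_pdivlMr ?exprn_gt0 // /uu -invfM mulrC -natrM.
rewrite ler_pdivrMr ?ltr0n ?muln_gt0 ?syl_pos // -natrX -natrM ler_nat.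
by rewrite -mulnn.
Qed.

Lemma pairing_sum n (u : 'rV[int]_n) (I : finType) (c : I -> int) (r : I -> 'rV[int]_n) :
  pairing u (\sum_i c i *: r i) = \sum_i c i * pairing u (r i).
Proof.
rewrite /pairing.
transitivity (\sum_(k < n) \sum_i u 0 k * (c i * r i 0 k)).
  apply: eq_bigr => k _; rewrite summxE mulr_sumr; apply: eq_bigr => i _; by rewrite mxE.
rewrite exchange_big; apply: eq_bigr => i _; rewrite mulr_sumr; apply: eq_bigr => k _.
by rewrite mulrCA.
Qed.

Lemma gor_dvd n (rho : 'I_n.+1 -> 'rV[int]_n) (lam : 'I_n.+1 -> nat) :
  are_weights rho lam -> gorenstein rho -> forall i, (lam i %| \sum_j lam j)%N.
Proof.
move=> [lpos [_ lsum]] gor i.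
have [u hu] := gor i.
have := pairing_sum u (fun j => (lam j)%:Z) rho.
rewrite lsum.
have -> : pairing u 0 = 0 by rewrite /pairing big1 // => k _; rewrite mxE mulr0.
rewrite (bigD1 i) //= (eq_bigr (fun j => (lam j)%:Z)); last by move=> j ji; rewrite hu // mulr1.
move=> /eqP; rewrite eq_sym addr_eq0 => /eqP H.
have Hh : ((\sum_j lam j)%N)%:Z = (lam i)%:Z * (1 - pairing u (rho i)).
  by rewrite (big_morph Posz PoszD (erefl _)) (bigD1 i) //= mulrBr mulr1 H opprK.
have := congr1 absz Hh; rewrite abszM !absz_nat => ->.
exact: dvdn_mulr.
Qed.

End RS.

Theorem mainTheorem10 (n : nat) (rho : 'I_n.+1 -> 'rV[int]_n)
  (lam : 'I_n.+1 -> nat) :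
  (forall i, primitive (rho i)) ->
  spans_positively rho ->
  are_weights rho lam ->
  gorenstein rho ->
  canonical_sing rho ->
  (\sum_(i < n.+1) lam i <= t_seq n)%N.
Proof.
move=> _ _ hw gor _; move: gor hw.
move=> gor hw; have ld := gor_dvd hw gor; clear gor.
case: hw => [lpos [lg _]].
rewrite /t_seq /sylvester addKn.
case: n rho lam ld lpos lg => [|n] rho lam ld lpos lg.
  by move: lg; rewrite !big_ord1 => ->.
set h := (\sum_i lam i)%N in ld *.
have hpos : (0 < h)%N by rewrite /h (bigD1 ord0) // addn_gt0 lpos.
pose s := sort geq [seq lam i | i <- enum 'I_n.+2].
have ssz : size s = n.+2 by rewrite size_sort size_map size_enum_ord.
have sperm : perm_eq s [seq lam i | i <- enum 'I_n.+2] by rewrite /s perm_sort.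
pose w := nth 0%N s.
have wmem : forall i, (i <= n.+1)%N -> exists j, w i = lam j.
  move=> i hi; have : w i \in s by rewrite mem_nth // ssz.
  rewrite mem_sort => /mapP [j _ ->]; by exists j.
have sumw : h = (\sum_(0 <= i < n.+2) w i)%N.
  rewrite -ssz -(big_nth 0%N xpredT id) (perm_big _ sperm) big_map /h big_enum //.
have prodw : (\prod_(0 <= i < n.+2) w i = \prod_i lam i)%N.
  rewrite -[in LHS]ssz -(big_nth 0%N xpredT id) (perm_big _ sperm) big_map big_enum //.
have := @analytic n.+1 w h sumw.
move=> H; have {H} H : (h ^ n.+2 <= \prod_(0 <= i < n.+2) w i * syl_prod n.+1 ^ 2)%N.
  apply: H.
  - by move=> i hi; have [j ->] := wmem i hi.
  - by move=> i hi; have [j ->] := wmem i hi.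
  - move=> i hi.
    have : sorted geq s by apply: sort_sorted => a b; exact: leq_total.
    by move/(sortedP 0%N) => /(_ i); rewrite ssz ltnS => /(_ hi).
have Pd : (\prod_i lam i %| h ^ n)%N by apply: prod_dvd.
have Pl : (\prod_i lam i <= h ^ n)%N by apply: dvdn_leq; rewrite // expn_gt0 hpos.
rewrite prodw in H.
have H2 : (h ^ n * h ^ 2 <= h ^ n * syl_prod n.+1 ^ 2)%N.
  rewrite -expnD addn2; apply: leq_trans H _; exact: leq_mul.
rewrite leq_pmul2l ?expn_gt0 ?hpos // in H2.
by rewrite -(@leq_exp2r _ _ 2).
Qed.
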